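(* Let $F$ be a field of characteristic $0$, $\tilde H$ a connected linear algebraic group over $F$, and $V$ a regular irreducible representation of $\tilde H$ defined over $F$. Then for all subspaces $W,W'\subseteq V$ there exists $\tilde h\in\tilde H$ such that $$\dim\bigl[(\tilde h.W)\cap W'\bigr]\le\frac{\dim W}{\dim V}\dim W'.$$ Moreover, the set of such $\tilde h$ forms a Zariski open subset of $\tilde H$.
   Context: Irreducible means $V$ has no $\tilde H$-invariant subspace other than $0$ and $V$. *)

(* Defs.v *)
From HB Require Import structures.
From mathcomp Require Import all_boot all_order all_algebra.
From mathcomp Require Import mpoly.
Set Implicit Arguments. Unset Strict Implicit. Unset Printing Implicit Defensive.
Import Order.TTheory GRing.Theory Num.Theory.
Local Open Scope ring_scope.

(* We model a linear algebraic group over F by its group of F-points, a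
   Zariski-closed subgroup of GL_n(F).  Regular functions on
   GL_n(F) are p(entries of A) / det(A)^k with p a polynomial over F in the
   n*n matrix entries. *)

Section Defs.
Variable F : fieldType.

Definition entries (n : nat) (A : 'M[F]_n) : 'I_(n * n) -> F :=
  fun i => mxvec A 0 i.

Definition zclosed_in (n : nat) (S C : 'M[F]_n -> Prop) : Prop :=
  (forall A, C A -> S A) /\
  exists P : {mpoly F[n * n]} -> Prop,
    forall A, S A -> (C A <-> forall p, P p -> p.@[entries A] = 0).

Definition zopen_in (n : nat) (S U : 'M[F]_n -> Prop) : Prop :=
  (forall A, U A -> S A) /\ zclosed_in S (fun A => S A /\ ~ U A).

Definition GLpred (n : nat) : 'M[F]_n -> Prop := fun A => A \in unitmx.

Definition linear_algebraic_group (n : nat) (H : 'M[F]_n -> Prop) : Prop :=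
  [/\ zclosed_in (@GLpred n) H,
      H 1%:M,
      (forall A B, H A -> H B -> H (A *m B)) &
      (forall A, H A -> H (invmx A))].

Definition zconnected (n : nat) (H : 'M[F]_n -> Prop) : Prop :=
  forall C1 C2 : 'M[F]_n -> Prop,
    zclosed_in H C1 -> zclosed_in H C2 ->
    (forall A, H A -> C1 A \/ C2 A) ->
    (forall A, ~ (C1 A /\ C2 A)) ->
    (forall A, H A -> C1 A) \/ (forall A, H A -> C2 A).

Definition regular_rep (n m : nat) (H : 'M[F]_n -> Prop)
    (rho : 'M[F]_n -> 'M[F]_m) : Prop :=
  [/\ forall A, H A -> rho A \in unitmx,
      forall A B, H A -> H B -> rho (A *m B) = rho A *m rho B &
      exists (k : nat) (p : 'I_m -> 'I_m -> {mpoly F[n * n]}),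
        forall A, H A -> forall i j,
          rho A i j = (p i j).@[entries A] / (\det A) ^+ k].

(* Action of h on a subspace W of V (W = row space of the matrix W):
   vectors v are row vectors, h.v := v *m (rho h)^T (i.e. column vector
   rho h *m v^T). *)
Definition act (n m : nat) (rho : 'M[F]_n -> 'M[F]_m) (h : 'M[F]_n)
    (W : 'M[F]_m) : 'M[F]_m := W *m (rho h)^T.

Definition invariant_subspace (n m : nat) (H : 'M[F]_n -> Prop)
    (rho : 'M[F]_n -> 'M[F]_m) (W : 'M[F]_m) : Prop :=
  forall h, H h -> (act rho h W <= W)%MS.

Definition irreducible_rep (n m : nat) (H : 'M[F]_n -> Prop)
    (rho : 'M[F]_n -> 'M[F]_m) : Prop :=
  (0 < m)%N /\
  forall W : 'M[F]_m, invariant_subspace H rho W ->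
    (\rank W = 0)%N \/ (\rank W = m)%N.

End Defs.

(* Main.v *)
Require Import Defs.
From HB Require Import structures.
From mathcomp Require Import all_boot all_order all_algebra.
From mathcomp Require Import mpoly.
From mathcomp Require Import ring zify perm.
From Stdlib Require Import Classical ClassicalEpsilon.
Set Implicit Arguments. Unset Strict Implicit. Unset Printing Implicit Defensive.
Import Order.TTheory GRing.Theory Num.Theory.
Local Open Scope ring_scope.

Lemma argmin_nat (T : Type) (P : T -> Prop) (f : T -> nat) :
  (exists x, P x) -> exists x, P x /\ forall y, P y -> (f x <= f y)%N.
Proof.
case=> x0 Px0.
suff: forall k, (forall x, P x -> f x = k -> exists z, P z /\ forall y, P y -> (f z <= f y)%N).
  by move/(_ (f x0) x0 Px0 erefl).
elim/ltn_ind => k IH x Px fxk.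
case: (classic (exists y, P y /\ (f y < k)%N)) => [[y [Py lty]]|no].
  exact: (IH (f y) lty y Py).
exists x; split => // y Py; rewrite fxk leqNgt; apply/negP => lt.
by apply: no; exists y.
Qed.

Lemma argmax_nat (T : Type) (P : T -> Prop) (f : T -> nat) (B : nat) :
  (exists x, P x) -> (forall x, P x -> (f x <= B)%N) ->
  exists x, P x /\ forall y, P y -> (f y <= f x)%N.
Proof.
move=> ex bnd; have [x [Px mx]] := argmin_nat (fun x => B - f x)%N ex.
exists x; split => // y Py; have := mx y Py.
have := bnd x Px; have := bnd y Py; lia.
Qed.

Section Main.
Variable F : fieldType.
Variables n m : nat.
Variable H : 'M[F]_n -> Prop.
Variable rho : 'M[F]_n -> 'M[F]_m.
Hypothesis Hunit : forall A, H A -> A \in unitmx.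
Hypothesis H1 : H 1%:M.
Hypothesis HM : forall A B, H A -> H B -> H (A *m B).
Hypothesis HV : forall A, H A -> H (invmx A).
Hypothesis rho_unit : forall A, H A -> rho A \in unitmx.
Hypothesis rhoM : forall A B, H A -> H B -> rho (A *m B) = rho A *m rho B.
Variable kr : nat.
Variable pr : 'I_m -> 'I_m -> {mpoly F[n * n]}.
Hypothesis rhoE : forall A, H A -> forall i j,
  rho A i j = (pr i j).@[entries A] / (\det A) ^+ kr.

Lemma detH x : H x -> \det x != 0.
Proof. by move=> /Hunit; rewrite unitmxE unitfE. Qed.

Definition Xmat : 'M[{mpoly F[n * n]}]_n := \matrix_(i, j) 'X_(mxvec_index i j).
Definition detP := \det Xmat.
Lemma detPE x : detP.@[entries x] = \det x.
Proof.
rewrite /detP -det_map_mx; congr (\det _); apply/matrixP => i j.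
rewrite !mxE; have := mevalXU (entries x) (mxvec_index i j); rewrite /entries mxvecE; exact.
Qed.

Definition reg (f : 'M[F]_n -> F) := exists (p : {mpoly F[n * n]}) (k : nat),
  forall x, H x -> f x = p.@[entries x] / (\det x) ^+ k.

Lemma reg_const c : reg (fun _ => c).
Proof. by exists c%:MP, 0%N => x _; rewrite mevalC expr0 divr1. Qed.

Lemma reg_add f g : reg f -> reg g -> reg (fun x => f x + g x).
Proof.
case=> p [k Ep]; case=> q [l Eq]; exists (p * detP ^+ l + q * detP ^+ k), (k + l)%N.
move=> x Hx; rewrite Ep // Eq // mevalD !mevalM !rmorphXn /= detPE exprD.
have : \det x ^+ k != 0 by rewrite expf_neq0 // detH.
have : \det x ^+ l != 0 by rewrite expf_neq0 // detH.
move: (\det x ^+ k) (\det x ^+ l) => a b nb na; field.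
by rewrite na nb.
Qed.

Lemma reg_mul f g : reg f -> reg g -> reg (fun x => f x * g x).
Proof.
case=> p [k Ep]; case=> q [l Eq]; exists (p * q), (k + l)%N.
move=> x Hx; rewrite Ep // Eq // mevalM exprD invfM; ring.
Qed.

Lemma reg_ext f g : (forall x, H x -> f x = g x) -> reg g -> reg f.
Proof. by move=> e [p [k E]]; exists p, k => x Hx; rewrite e // E. Qed.

Lemma reg_sum (I : Type) (r : seq I) (G : I -> 'M[F]_n -> F) :
  (forall i, reg (G i)) -> reg (fun x => \sum_(i <- r) G i x).
Proof.
move=> hG; elim: r => [|i r IH].
  by apply: (reg_ext (g := fun _ => 0)) => [x _|]; rewrite ?big_nil //; apply: reg_const.
apply: (reg_ext (g := fun x => G i x + \sum_(j <- r) G j x)) => [x _|]; first by rewrite big_cons.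
exact: reg_add.
Qed.

Lemma reg_prod (I : Type) (r : seq I) (G : I -> 'M[F]_n -> F) :
  (forall i, reg (G i)) -> reg (fun x => \prod_(i <- r) G i x).
Proof.
move=> hG; elim: r => [|i r IH].
  by apply: (reg_ext (g := fun _ => 1)) => [x _|]; rewrite ?big_nil //; apply: reg_const.
apply: (reg_ext (g := fun x => G i x * \prod_(j <- r) G j x)) => [x _|]; first by rewrite big_cons.
exact: reg_mul.
Qed.

Lemma reg_num f x : reg f -> H x -> f x != 0 ->
  exists p : {mpoly F[n * n]}, p.@[entries x] != 0 /\
    forall y, H y -> p.@[entries y] != 0 -> f y != 0.
Proof.
case=> p [k E] Hx fx; exists p; split.
  by apply: contraNneq fx; rewrite E // => ->; rewrite mul0r.
move=> y Hy py; rewrite E //; apply: mulf_neq0 => //; rewrite invr_neq0 // expf_neq0 // detH //.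
Qed.

Lemma open_closed (C : 'M[F]_n -> Prop) :
  (forall x, C x -> H x) ->
  (forall x, C x -> exists f, reg f /\ f x != 0 /\ forall y, H y -> f y != 0 -> C y) ->
  zclosed_in H (fun A => H A /\ ~ C A).
Proof.
move=> CH hC; split; first by move=> A [].
exists (fun p : {mpoly F[n * n]} => forall y, H y -> p.@[entries y] != 0 -> C y).
move=> A HA; split.
  case=> _ nCA p Pp; apply/eqP; apply: contraT => nz; exfalso; apply: nCA; exact: (Pp A HA nz).
move=> allP; split => // CA.
have [f [rf [fA hf]]] := hC A CA.
have [p [pA hp]] := reg_num rf HA fA.
move/eqP: pA; apply; apply: allP => y Hy py; exact: hf y Hy (hp y Hy py).
Qed.

Lemma zclosed_ext (C C' : 'M[F]_n -> Prop) :
  (forall A, C' A -> H A) -> (forall A, H A -> (C A <-> C' A)) ->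
  zclosed_in H C -> zclosed_in H C'.
Proof.
move=> C'H e [_ [P hP]]; split => //; exists P => A HA.
by rewrite -(hP A HA); apply: iff_sym; apply: e.
Qed.


Definition rt (x : 'M[F]_n) : 'M[F]_(1 + m) := block_mx 1%:M 0 0 (rho x).

Lemma rtM x y : H x -> H y -> rt (x *m y) = rt x *m rt y.
Proof.
move=> Hx Hy; rewrite /rt mulmx_block rhoM // !mulmx0 !mul0mx !addr0 !add0r.
by rewrite mulmx1.
Qed.

Lemma reg_rt i j : reg (fun x => rt x i j).
Proof.
rewrite /rt -(splitK i) -(splitK j); case: (split i) => i'; case: (split j) => j' /=.
- apply: (reg_ext (g := fun _ => (1%:M : 'M[F]_1) i' j')) => [x _|]; last exact: reg_const.
  by rewrite block_mxEul.
- apply: (reg_ext (g := fun _ => 0)) => [x _|]; last exact: reg_const.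
  by rewrite block_mxEur mxE.
- apply: (reg_ext (g := fun _ => 0)) => [x _|]; last exact: reg_const.
  by rewrite block_mxEdl mxE.
- apply: (reg_ext (g := fun x => rho x i' j')) => [x _|]; first by rewrite block_mxEdr.
  exists (pr i' j'), kr => x Hx; exact: rhoE.
Qed.

Definition Idx (D : nat) := ({ffun 'I_D -> 'I_(1 + m)} * {ffun 'I_D -> 'I_(1 + m)})%type.

Definition mono (D : nat) (x : 'M[F]_n) (s : Idx D) : F :=
  \prod_(t < D) rt x (s.1 t) (s.2 t).

Definition cls (D : nat) (f : 'M[F]_n -> F) := exists r : seq (F * Idx D),
  forall x, H x -> f x = \sum_(p <- r) p.1 * mono x p.2.

Lemma mono_mul D z w I J : H z -> H w ->
  mono (z *m w) (I, J) = \sum_(K : {ffun 'I_D -> 'I_(1 + m)}) mono z (I, K) * mono w (K, J).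
Proof.
move=> Hz Hw; rewrite /mono /=.
under eq_bigr => t _ do rewrite rtM // mxE.
rewrite bigA_distr_bigA /=; apply: eq_bigr => K _.
by rewrite -big_split.
Qed.

Lemma cls_ext D f g : (forall x, H x -> f x = g x) -> cls D g -> cls D f.
Proof. by move=> e [r E]; exists r => x Hx; rewrite e // E. Qed.

Lemma cls_reg D f : cls D f -> reg f.
Proof.
case=> r E; apply: (reg_ext E); apply: reg_sum => p.
apply: reg_mul; first exact: reg_const.
by apply: reg_prod => t; apply: reg_rt.
Qed.

Lemma cls0 D : cls D (fun _ => 0).
Proof. by exists [::] => x _; rewrite big_nil. Qed.

Lemma cls_add D f g : cls D f -> cls D g -> cls D (fun x => f x + g x).
Proof. by case=> r Er [q Eq]; exists (r ++ q) => x Hx; rewrite big_cat Er // Eq. Qed.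

Lemma cls_scale D c f : cls D f -> cls D (fun x => c * f x).
Proof.
case=> r Er; exists [seq (c * p.1, p.2) | p <- r] => x Hx.
by rewrite big_map Er // mulr_sumr; apply: eq_bigr => p _; rewrite mulrA.
Qed.

Lemma cls_sum D (I : Type) (r : seq I) (G : I -> 'M[F]_n -> F) :
  (forall i, cls D (G i)) -> cls D (fun x => \sum_(i <- r) G i x).
Proof.
move=> hG; elim: r => [|i r IH].
  by apply: (cls_ext (g := fun _ => 0)) => [x _|]; rewrite ?big_nil //; apply: cls0.
apply: (cls_ext (g := fun x => G i x + \sum_(j <- r) G j x)) => [x _|]; first by rewrite big_cons.
exact: cls_add.
Qed.

Definition ccat (T : Type) D E (I : {ffun 'I_D -> T}) (I' : {ffun 'I_E -> T}) :
  {ffun 'I_(D + E) -> T} :=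
  [ffun t => match split t with inl a => I a | inr b => I' b end].

Lemma mono_cat D E x (s : Idx D) (s' : Idx E) :
  mono x (ccat s.1 s'.1, ccat s.2 s'.2) = mono x s * mono x s'.
Proof.
rewrite /mono big_split_ord /=; congr (_ * _); apply: eq_bigr => t _; rewrite !ffunE.
  by rewrite (unsplitK (inl t)).
by rewrite (unsplitK (inr t)).
Qed.

Lemma cls_mul D E f g : cls D f -> cls E g -> cls (D + E) (fun x => f x * g x).
Proof.
case=> r Er [q Eq].
exists [seq (p.1 * p'.1, (ccat p.2.1 p'.2.1, ccat p.2.2 p'.2.2)) | p <- r, p' <- q].
move=> x Hx; rewrite big_allpairs_dep Er // Eq // mulr_suml; apply: eq_bigr => p _.
rewrite mulr_sumr; apply: eq_bigr => p' _ /=.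
by rewrite mono_cat; ring.
Qed.

Lemma cls_const c : cls 0 (fun _ => c).
Proof.
exists [:: (c, ([ffun t => ord0], [ffun t => ord0]))] => x _.
by rewrite big_cons big_nil /mono big_ord0 mulr1 addr0.
Qed.

Lemma cls_rt i j : cls 1 (fun x => rt x i j).
Proof.
exists [:: (1, ([ffun t => i], [ffun t => j]))] => x _.
by rewrite big_cons big_nil /mono big_ord1 !ffunE mul1r addr0.
Qed.

Lemma cls_rtrans D f w : H w -> cls D f -> cls D (fun x => f (x *m w)).
Proof.
move=> Hw [r Er].
exists [seq (p.1 * mono w (K, p.2.2), (p.2.1, K)) | p <- r,
                K <- index_enum {ffun 'I_D -> 'I_(1 + m)}].
move=> x Hx; rewrite big_allpairs_dep (Er _ (HM Hx Hw)); apply: eq_bigr => p _.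
case: p => c [I J] /=; rewrite mono_mul // mulr_sumr; apply: eq_bigr => K _.
by rewrite /=; ring.
Qed.

Lemma cls_ltrans D f w : H w -> cls D f -> cls D (fun x => f (w *m x)).
Proof.
move=> Hw [r Er].
exists [seq (p.1 * mono w (p.2.1, K), (K, p.2.2)) | p <- r,
                K <- index_enum {ffun 'I_D -> 'I_(1 + m)}].
move=> x Hx; rewrite big_allpairs_dep (Er _ (HM Hw Hx)); apply: eq_bigr => p _.
case: p => c [I J] /=; rewrite mono_mul // mulr_sumr; apply: eq_bigr => K _.
by rewrite /=; ring.
Qed.

Lemma cls_prod r (G : 'I_r -> 'M[F]_n -> F) :
  (forall i, cls 1 (G i)) -> cls r (fun x => \prod_i G i x).
Proof.
elim: r G => [|r IH] G hG.
  apply: (cls_ext (g := fun _ => 1)) => [x _|]; first by rewrite big_ord0.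
  exact: cls_const.
apply: (cls_ext (g := fun x => G ord0 x * \prod_(i < r) G (lift ord0 i) x)) => [x _|].
  by rewrite big_ord_recl.
exact: (cls_mul (hG ord0) (IH _ (fun i => hG _))).
Qed.

Lemma cls_det r (A : 'I_r -> 'I_r -> 'M[F]_n -> F) :
  (forall i j, cls 1 (A i j)) -> cls r (fun x => \det (\matrix_(i, j) A i j x)).
Proof.
move=> hA.
apply: (cls_ext (g := fun x => \sum_(s : 'S_r) (-1) ^+ s * \prod_i A i (s i) x)) => [x _|].
  by rewrite /determinant; apply: eq_bigr => s _; congr (_ * _); apply: eq_bigr => i _; rewrite mxE.
apply: cls_sum => s; apply: cls_scale; apply: cls_prod => i; exact: hA.
Qed.


Definition Mx (W X : 'M[F]_m) x : 'M[F]_(m + m, m) := col_mx (W *m (rho x)^T) X.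

Lemma cls_const1 c : cls 1 (fun _ => c).
Proof.
apply: (cls_ext (g := fun x => c * rt x (lshift m (ord0 : 'I_1)) (lshift m (ord0 : 'I_1)))).
  by move=> x _; rewrite /rt block_mxEul mxE eqxx mulr1.
by apply: cls_scale; apply: cls_rt.
Qed.

Lemma cls_Mx (W X : 'M[F]_m) i j : cls 1 (fun x => Mx W X x i j).
Proof.
rewrite /Mx -(splitK i); case: (split i) => i' /=.
  apply: (cls_ext (g := fun x => \sum_(k <- index_enum 'I_m) W i' k * rt x (rshift 1 j) (rshift 1 k))).
    move=> x _; rewrite col_mxEu mxE; apply: eq_bigr => k _.
    by rewrite /rt block_mxEdr mxE.
  by apply: cls_sum => k; apply: cls_scale; apply: cls_rt.
apply: (cls_ext (g := fun _ => X i' j)); first by move=> x _; rewrite col_mxEd.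
exact: cls_const1.
Qed.

Lemma minor_wit (W X : 'M[F]_m) x : H x -> exists r c, cls r c /\ c x != 0 /\
  forall y, H y -> c y != 0 -> (\rank (Mx W X x) <= \rank (Mx W X y))%N.
Proof.
move=> Hx; set A := Mx W X x.
pose f := maxrankfun A.
have fr : row_free (rowsub f A) := maxrowsub_free A.
have fullBT : row_full (rowsub f A)^T by rewrite /row_full mxrank_tr.
pose g := fullrankfun fullBT.
have uC := fullrowsub_unit fullBT.
pose c y := \det (\matrix_(i, j) Mx W X y (f i) (g j)).
exists (\rank A), c; split; first by apply: cls_det => i j; apply: cls_Mx.
split.
  have -> : c x = \det (rowsub g (rowsub f A)^T).
    rewrite /c -det_tr; congr (\det _); apply/matrixP => i j; rewrite !mxE //.
  by move: uC; rewrite unitmxE unitfE.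
move=> y Hy cy.
have uM : (\matrix_(i, j) Mx W X y (f i) (g j)) \in unitmx by rewrite unitmxE unitfE.
apply: (@leq_trans (\rank (\matrix_(i, j) Mx W X y (f i) (g j)))); first by rewrite (mxrank_unit uM).
rewrite -mxrank_tr.
have -> : (\matrix_(i, j) Mx W X y (f i) (g j))^T = rowsub g (rowsub f (Mx W X y))^T.
  by apply/matrixP => i j; rewrite !mxE.
apply: leq_trans (mxrankS (rowsub_sub _ _)) _.
by rewrite mxrank_tr; apply: mxrankS; apply: rowsub_sub.
Qed.

Definition dd (W X : 'M[F]_m) x := \rank (act rho x W :&: X)%MS.

Lemma rank_act (W : 'M[F]_m) x : H x -> \rank (W *m (rho x)^T) = \rank W.
Proof. by move=> Hx; rewrite mxrankMfree // row_free_unit unitmx_tr rho_unit. Qed.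

Lemma dd_formula (W X : 'M[F]_m) x : H x -> (dd W X x + \rank (Mx W X x) = \rank W + \rank X)%N.
Proof.
move=> Hx; rewrite /dd /act /Mx -(rank_act W Hx) -(mxrank_sum_cap (W *m (rho x)^T) X).
by rewrite addnC (addsmxE _ _).1.
Qed.


Lemma sum_enum (T : finType) (G : T -> F) :
  \sum_(i < #|{: T}|) G (enum_val i) = \sum_(s : T) G s.
Proof.
rewrite (reindex (@enum_rank T)) /=; last first.
  by exists enum_val => i _; [exact: enum_rankK | exact: enum_valK].
by apply: eq_bigr => s _; rewrite enum_rankK.
Qed.

Definition uvec D x : 'rV[F]_(#|{: Idx D}|) := \row_i mono x (enum_val i).

Definition Tm D w : 'M[F]_(#|{: Idx D}|) :=
  \matrix_(i', i) (((enum_val i').1 == (enum_val i).1)%:R *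
                   mono w ((enum_val i').2, (enum_val i).2)).

Lemma uvec_mul D z w : H z -> H w -> uvec D (z *m w) = uvec D z *m Tm D w.
Proof.
move=> Hz Hw; apply/rowP => i; rewrite /uvec /Tm !mxE.
case E: (enum_val i) => [I J]; rewrite mono_mul //.
symmetry; under eq_bigr => i' _ do rewrite !mxE E /=.
rewrite (sum_enum (fun s : Idx D => mono z s * ((s.1 == I)%:R * mono w (s.2, J)))).
rewrite -(pair_bigA _ (fun I' K => mono z (I', K) * ((I' == I)%:R * mono w (K, J)))) /=.
rewrite (bigD1 I) //= [X in _ + X]big1 ?addr0 => [|I' nI]; last first.
  by apply: big1 => K _; rewrite (negPf nI) mul0r mulr0.
by apply: eq_bigr => K _; rewrite eqxx mul1r.
Qed.

Lemma cls_vec D a : cls D a -> exists phi : 'cV[F]_(#|{: Idx D}|),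
  forall x, H x -> a x = (uvec D x *m phi) 0 0.
Proof.
case=> r Er; exists (\col_i \sum_(p <- r | p.2 == enum_val i) p.1) => x Hx.
rewrite Er // /uvec mxE; symmetry.
under eq_bigr => i _ do rewrite !mxE.
rewrite (sum_enum (fun s : Idx D => mono x s * \sum_(p <- r | p.2 == s) p.1)).
under eq_bigr => s _ do rewrite mulr_sumr big_mkcond /=.
rewrite exchange_big /=; apply: eq_bigr => p _.
rewrite (bigD1 p.2) //= eqxx [X in _ + X]big1 ?addr0 => [|s ns]; first by rewrite mulrC.
by rewrite eq_sym (negPf ns).
Qed.

Hypothesis Hconn : zconnected H.

Lemma irr D E a c : cls D a -> cls E c -> (exists y, H y /\ c y != 0) ->
  (exists y, H y /\ a y != 0) -> exists y, H y /\ c y != 0 /\ a y != 0.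
Proof.
move=> ca cc [y1 [Hy1 cy1]] [y2 [Hy2 ay2]].
apply: NNPP => hno.
have hz : forall y, H y -> c y != 0 -> a y = 0.
  move=> y Hy cy; apply/eqP; apply: contraT => ay; exfalso; apply: hno; by exists y.
have [phi Ephi] := cls_vec ca.
pose P (S : 'M[F]_(#|{: Idx D}|)) := (S <= kermx phi)%MS /\ exists E' c', cls E' c' /\
   (exists y, H y /\ c' y != 0) /\ forall y, H y -> c' y != 0 -> (uvec D y <= S)%MS.
have P0 : P (kermx phi).
  split => //; exists E, c; split => //; split; first by exists y1.
  move=> y Hy cy; rewrite sub_kermx; apply/eqP/matrixP => i j.
  by rewrite !ord1 [RHS]mxE -Ephi //; apply: hz.
have [S0 [[S0k [E0 [c0 [cc0 [[z0 [Hz0 cz0]] hc0]]]]] S0min]] :=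
  argmin_nat (fun S => \rank S) (ex_intro _ _ P0).
pose Y z := H z /\ (uvec D z <= S0)%MS.
have key : forall w, H w -> (exists z, H z /\ c0 z != 0 /\ c0 (z *m w) != 0) ->
    forall z, Y z -> Y (z *m w).
  move=> w Hw [z [Hz [cz czw]]].
  pose Sw := kermx (Tm D w *m cokermx S0).
  have hSw : forall z', H z' -> (uvec D z' <= Sw)%MS = (uvec D (z' *m w) <= S0)%MS.
    by move=> z' Hz'; rewrite sub_kermx mulmxA -uvec_mul // submxE.
  have PS : P (S0 :&: Sw)%MS.
    split; first by apply: submx_trans S0k; apply: capmxSl.
    exists (E0 + E0)%N, (fun x => c0 x * c0 (x *m w)); split.
      by apply: cls_mul => //; apply: cls_rtrans.
    split; first by exists z; split => //; rewrite mulf_neq0.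
    move=> y Hy; rewrite mulf_eq0 negb_or => /andP [cy cyw].
    by rewrite sub_capmx hc0 // hSw // hc0 //; apply: HM.
  have := S0min _ PS; rewrite (geq_leqif (mxrank_leqif_sup (capmxSl S0 Sw))) => sS.
  move=> z' [Hz' uz']; split; first exact: HM.
  by rewrite -hSw //; apply: submx_trans (capmxSr S0 Sw); apply: submx_trans sS.
pose Stab w := H w /\ forall z, H z -> (Y z <-> Y (z *m w)).
have O1 : forall w, H w -> (exists z, H z /\ c0 z != 0 /\ c0 (z *m w) != 0) -> Stab w.
  move=> w Hw ex; split => // z Hz; split; first exact: key.
  have ex' : exists z, H z /\ c0 z != 0 /\ c0 (z *m invmx w) != 0.
    case: ex => z1 [Hz1 [c1 c1w]]; exists (z1 *m w); split; first exact: HM.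
    by rewrite mulmxK ?Hunit.
  move=> Yzw; have := key _ (HV Hw) ex' _ Yzw; by rewrite mulmxK ?Hunit.
have StabM : forall s w, Stab s -> Stab w -> Stab (s *m w).
  move=> s w [Hs hs] [Hw hw]; split; first exact: HM.
  move=> z Hz; rewrite mulmxA; apply: (iff_trans (hs z Hz)); apply: hw; exact: HM.
have StabV : forall w, Stab w -> Stab (invmx w).
  move=> w [Hw hw]; split; first exact: HV.
  move=> z Hz; have := hw (z *m invmx w) (HM Hz (HV Hw)).
  rewrite mulmxKV ?Hunit // => e; exact: iff_sym e.
have Stab1 : Stab 1%:M by split => // z Hz; rewrite mulmx1.
have nbhd : forall x, H x -> exists f, reg f /\ f x != 0 /\
    forall y, H y -> f y != 0 -> Stab (invmx x *m y).
  move=> x Hx; exists (fun y => c0 ((z0 *m invmx x) *m y)); split.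
    by apply: (cls_reg (D := E0)); apply: cls_ltrans => //; apply: HM => //; apply: HV.
  split; first by rewrite mulmxKV ?Hunit.
  move=> y Hy fy; apply: O1; first by apply: HM => //; apply: HV.
  by exists z0; split => //; split => //; rewrite mulmxA.
have C2closed : zclosed_in H (fun A => H A /\ ~ Stab A).
  apply: open_closed; first by move=> x [].
  move=> s Ss; have [f [rf [fs hf]]] := nbhd s Ss.1; exists f; split => //; split => //.
  move=> y Hy fy; have := StabM _ _ Ss (hf y Hy fy).
  by rewrite mulKVmx ?Hunit //; case: Ss.
have C1closed : zclosed_in H Stab.
  apply: (zclosed_ext (C := fun A => H A /\ ~ (H A /\ ~ Stab A))); first by move=> A [].
    move=> A HA; split; first by case=> _ h; apply: NNPP => ns; apply: h.
    by move=> SA; split => // [[_ ns]].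
  apply: open_closed; first by move=> x [].
  move=> x [Hx nSx]; have [f [rf [fx hf]]] := nbhd x Hx; exists f; split => //; split => //.
  move=> y Hy fy; split => // Sy; apply: nSx.
  have Sw := hf y Hy fy.
  have -> : x = y *m invmx (invmx x *m y).
    apply: (canRL (mulmxK (Hunit (HM (HV Hx) Hy)))).
    by rewrite mulKVmx ?Hunit.
  exact: StabM Sy (StabV _ Sw).
have disj : forall A, ~ (Stab A /\ (H A /\ ~ Stab A)) by move=> A [SA [_ nSA]].
have cover : forall A, H A -> Stab A \/ (H A /\ ~ Stab A).
  by move=> A HA; case: (classic (Stab A)) => h; [left | right].
have [allS|allC] := Hconn C1closed C2closed cover disj; last first.
  by case: (allC _ H1) => _; apply.
have Yz0 : Y z0 by split => //; apply: hc0.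
have Yy2 : Y y2.
  have [_ hw] := allS _ (HM (HV Hz0) Hy2).
  by have := (hw z0 Hz0).1 Yz0; rewrite mulKVmx ?Hunit.
move/eqP: ay2; apply; rewrite Ephi //.
have : (uvec D y2 <= kermx phi)%MS by apply: submx_trans S0k; case: Yy2.
by rewrite sub_kermx => /eqP ->; rewrite mxE.
Qed.


Section Final.
Variable W : 'M[F]_m.
Hypothesis Hirr : irreducible_rep H rho.

Lemma kmin_ex (X : 'M[F]_m) : exists k, (exists g, H g /\ dd W X g = k) /\
  forall g, H g -> (k <= dd W X g)%N.
Proof.
have [g [Hg gm]] := argmin_nat (dd W X) (ex_intro H _ H1).
by exists (dd W X g); split; [exists g | ].
Qed.

Definition kf X := proj1_sig (constructive_indefinite_description _ (kmin_ex X)).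

Lemma kfP X : (exists g, H g /\ dd W X g = kf X) /\ forall g, H g -> (kf X <= dd W X g)%N.
Proof. exact: (proj2_sig (constructive_indefinite_description _ (kmin_ex X))). Qed.

Lemma kf_opt X : exists D c, cls D c /\ (exists y, H y /\ c y != 0) /\
  forall y, H y -> c y != 0 -> dd W X y = kf X.
Proof.
have [[g0 [Hg0 eg0]] kmin] := kfP X.
have [D [c [cc [cg0 hc]]]] := minor_wit W X Hg0.
exists D, c; split => //; split; first by exists g0.
move=> y Hy cy; have le := hc y Hy cy.
have := dd_formula W X Hy; have := dd_formula W X Hg0; have := kmin y Hy; lia.
Qed.

Lemma joint X Y : exists g, H g /\ dd W X g = kf X /\ dd W Y g = kf Y.
Proof.
have [D [c [cc [cne hc]]]] := kf_opt X.
have [E [a [ca [ane ha]]]] := kf_opt Y.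
have [y [Hy [cy ay]]] := irr ca cc cne ane.
by exists y; split => //; split; [apply: hc | apply: ha].
Qed.

Lemma dd_le_rank (X : 'M[F]_m) g : (dd W X g <= \rank X)%N.
Proof. by apply: mxrankS; apply: capmxSr. Qed.

Lemma kf_le_rank (X : 'M[F]_m) : (kf X <= \rank X)%N.
Proof. exact: leq_trans ((kfP X).2 _ H1) (dd_le_rank X _). Qed.

Lemma dd_trans X h g : H h -> H g ->
  dd W (X *m (rho h)^T) g = dd W X (invmx h *m g).
Proof.
move=> Hh Hg; have Hg' : H (invmx h *m g) by apply: HM => //; apply: HV.
have e1 := dd_formula W (X *m (rho h)^T) Hg.
have e2 := dd_formula W X Hg'.
have : \rank (Mx W (X *m (rho h)^T) g) = \rank (Mx W X (invmx h *m g)).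
  have -> : Mx W (X *m (rho h)^T) g = Mx W X (invmx h *m g) *m (rho h)^T.
    by rewrite /Mx mul_col_mx -mulmxA -trmx_mul -(rhoM Hh Hg') mulKVmx ?Hunit.
  by rewrite mxrankMfree // row_free_unit unitmx_tr rho_unit.
move: e1 e2; rewrite rank_act //; lia.
Qed.

Lemma kf_trans X h : H h -> kf (X *m (rho h)^T) = kf X.
Proof.
move=> Hh; apply/eqP; rewrite eqn_leq; apply/andP; split.
  have [[g0 [Hg0 e0]] _] := kfP X.
  have Hhg : H (h *m g0) by apply: HM.
  have := (kfP (X *m (rho h)^T)).2 _ Hhg; rewrite dd_trans // mulKmx ?Hunit //.
  by rewrite e0.
have [[g1 [Hg1 e1]] _] := kfP (X *m (rho h)^T).
have Hhg : H (invmx h *m g1) by apply: HM => //; apply: HV.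
by have := (kfP X).2 _ Hhg; rewrite -dd_trans // e1.
Qed.

Lemma cap_ineq (A B C : 'M[F]_m) :
  (\rank (A :&: B) + \rank (A :&: C) <= \rank (A :&: (B + C)) + \rank (A :&: (B :&: C)))%N.
Proof.
rewrite -(mxrank_sum_cap (A :&: B)%MS (A :&: C)%MS); apply: leq_add; apply: mxrankS.
  rewrite addsmx_sub; apply/andP; split; rewrite sub_capmx capmxSl /=.
    exact: submx_trans (capmxSr _ _) (addsmxSl _ _).
  exact: submx_trans (capmxSr _ _) (addsmxSr _ _).
rewrite sub_capmx !sub_capmx; apply/andP; split.
  exact: submx_trans (capmxSl _ _) (capmxSl _ _).
apply/andP; split.
  exact: submx_trans (capmxSl _ _) (capmxSr _ _).
exact: submx_trans (capmxSr _ _) (capmxSr _ _).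
Qed.

Lemma ratio_cmp (N a b k1 k2 : nat) : (0 < N)%N -> (0 < a)%N -> (0 < b)%N ->
  (a %| N)%N -> (b %| N)%N ->
  (k1 * (N %/ a) <= k2 * (N %/ b))%N = (k1 * b <= k2 * a)%N.
Proof.
move=> N0 a0 b0 da db.
have ea : (N %/ a * a = N)%N by rewrite divnK.
have eb : (N %/ b * b = N)%N by rewrite divnK.
rewrite -(@leq_pmul2r (a * b)) ?muln_gt0 ?a0 //.
have -> : (k1 * (N %/ a) * (a * b) = k1 * b * N)%N.
  by move: (N %/ a)%N ea => u <-; ring.
have -> : (k2 * (N %/ b) * (a * b) = k2 * a * N)%N.
  by move: (N %/ b)%N eb => u <-; ring.
by rewrite leq_pmul2r.
Qed.


Definition qv (Y : 'M[F]_m) := (kf Y * (m`! %/ \rank Y))%N.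
Definition score (Y : 'M[F]_m) := (qv Y * m.+1 + \rank Y)%N.

Lemma rank_dvd (Y : 'M[F]_m) : (0 < \rank Y)%N -> (\rank Y %| m`!)%N.
Proof. by move=> rp; apply: dvdn_fact; rewrite rp rank_leq_col. Qed.

Lemma opt_ex : exists X, (0 < \rank X)%N /\
  forall Y, (0 < \rank Y)%N -> (score Y <= score X)%N.
Proof.
have m0 : (0 < m)%N by case: Hirr.
apply: (@argmax_nat _ (fun Y : 'M[F]_m => (0 < \rank Y)%N) score (m`! * m.+1 + m)).
  by exists 1%:M; rewrite mxrank1.
move=> Y rp; rewrite /score /qv; apply: leq_add; last exact: rank_leq_col.
rewrite leq_mul2r /=.
apply: leq_trans (leq_mul (kf_le_rank Y) (leqnn _)) _.
by rewrite mulnC divnK ?rank_dvd.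
Qed.

Section Opt.
Variable X : 'M[F]_m.
Hypothesis hX : (0 < \rank X)%N.
Hypothesis hs : forall Y, (0 < \rank Y)%N -> (score Y <= score X)%N.

Lemma q_le (Y : 'M[F]_m) : (0 < \rank Y)%N -> (qv Y <= qv X)%N.
Proof.
move=> hY; rewrite leqNgt; apply/negP => lt.
have := hs hY; rewrite /score.
have := rank_leq_col X.
have : ((qv X).+1 * m.+1 <= qv Y * m.+1)%N by rewrite leq_mul2r lt orbT.
rewrite mulSn; lia.
Qed.

Lemma opt_a (Y : 'M[F]_m) : (0 < \rank Y)%N -> (kf Y * \rank X <= kf X * \rank Y)%N.
Proof.
move=> hY; have := q_le hY; rewrite /qv ratio_cmp //.
- exact: fact_gt0.
- exact: rank_dvd.
- exact: rank_dvd.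
Qed.

Lemma opt_b (Y : 'M[F]_m) : (0 < \rank Y)%N -> (kf X * \rank Y <= kf Y * \rank X)%N ->
  (\rank Y <= \rank X)%N.
Proof.
move=> hY le.
have le2 : (qv X <= qv Y)%N.
  rewrite /qv ratio_cmp //; [exact: fact_gt0 | exact: rank_dvd | exact: rank_dvd].
have := q_le hY; have := hs hY; rewrite /score => hsc le1.
have e : qv Y = qv X by apply/eqP; rewrite eqn_leq le1 le2.
by move: hsc; rewrite e leq_add2l.
Qed.

Lemma opt_inv h : H h -> (X *m (rho h)^T <= X)%MS.
Proof.
move=> Hh; set X' := X *m (rho h)^T.
have rX' : \rank X' = \rank X by apply: rank_act.
have kX' : kf X' = kf X by apply: kf_trans.
have [g [Hg [eY eZ]]] := joint (X + X')%MS (X :&: X')%MS.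
have ci : (dd W X g + dd W X' g <= dd W (X + X')%MS g + dd W (X :&: X')%MS g)%N
  by apply: cap_ineq.
have mX := (kfP X).2 g Hg.
have mX' := (kfP X').2 g Hg.
have rs := mxrank_sum_cap X X'.
have aZ : (kf (X :&: X')%MS * \rank X <= kf X * \rank (X :&: X')%MS)%N.
  case: (posnP (\rank (X :&: X')%MS)) => [r0|rp]; last exact: opt_a.
  by have := kf_le_rank (X :&: X')%MS; rewrite r0 leqn0 => /eqP ->.
have rYp : (0 < \rank (X + X')%MS)%N.
  by apply: leq_trans hX _; apply: mxrankS; apply: addsmxSl.
have bY : (kf X * \rank (X + X')%MS <= kf (X + X')%MS * \rank X)%N.
  move: ci aZ rs; rewrite eY eZ rX'; move: mX mX'; rewrite kX'.
  move: (kf X) (kf (X + X')%MS) (kf (X :&: X')%MS) (\rank X) (\rank (X + X')%MS)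
        (\rank (X :&: X')%MS) (dd W X g) (dd W X' g) => kx ky kz rx ry rz d1 d2.
  nia.
have := opt_b rYp bY.
rewrite (geq_leqif (mxrank_leqif_sup (addsmxSl X X'))) => sYX.
exact: submx_trans (addsmxSr X X') sYX.
Qed.

End Opt.

Lemma final (W' : 'M[F]_m) : (exists h, H h /\ (dd W W' h * m <= \rank W * \rank W')%N) /\
  zopen_in H (fun h => H h /\ (dd W W' h * m <= \rank W * \rank W')%N).
Proof.
split.
  have [X [hX hs]] := opt_ex.
  have inv : invariant_subspace H rho X by move=> h Hh; exact: opt_inv.
  have rXm : \rank X = m.
    by case: Hirr => _ /(_ X inv) [r0|//]; move: hX; rewrite r0.
  have kX : kf X = \rank W.
    have [[g0 [Hg0 <-]] _] := kfP X.
    have := dd_formula W X Hg0.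
    have : (\rank X <= \rank (Mx W X g0))%N.
      apply: mxrankS; rewrite /Mx -(((addsmxE _ _).2 _ X).2); exact: addsmxSr.
    have := rank_leq_col (Mx W X g0); lia.
  have [[g1 [Hg1 e1]] _] := kfP W'.
  exists g1; split => //; rewrite e1.
  case: (posnP (\rank W')) => [r0|rp].
    by have := kf_le_rank W'; rewrite r0 leqn0 => /eqP ->.
  by have := opt_a hX hs rp; rewrite rXm kX.
split; first by move=> A [].
apply: open_closed; first by move=> x [].
move=> x [Hx hx]; have [D [c [cc [cx hc]]]] := minor_wit W W' Hx.
exists c; split; first exact: (cls_reg cc).
split => // y Hy cy; split => //.
have le := hc y Hy cy.
have := dd_formula W W' Hy; have := dd_formula W W' Hx => e1 e2.
have : (dd W W' y <= dd W W' x)%N by lia.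
by move=> le2; apply: leq_trans hx; rewrite leq_mul2r le2 orbT.
Qed.

End Final.

End Main.

Theorem theorem1p11 (F : fieldType) (n m : nat)
    (H : 'M[F]_n -> Prop) (rho : 'M[F]_n -> 'M[F]_m) :
  [pchar F] =i pred0 ->
  linear_algebraic_group H -> zconnected H ->
  regular_rep H rho -> irreducible_rep H rho ->
  forall W W' : 'M[F]_m,
    (exists h, H h /\
       (\rank (act rho h W :&: W')%MS * m <= \rank W * \rank W')%N) /\
    zopen_in H (fun h => H h /\
       (\rank (act rho h W :&: W')%MS * m <= \rank W * \rank W')%N).
Proof.
move=> _ [Hcl H1 HM HV] Hconn [Hu HrM [k [p Hp]]] Hirr W W'.
have Hunit : forall A, H A -> A \in unitmx by move=> A /(Hcl.1 A).
exact: (final Hunit H1 HM HV Hu HrM Hp Hconn W Hirr W').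
Qed.
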